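(* $\mathrm{HS}_{\mathsf{ct}}\not\geq\mathrm{HS}_{\mathsf{st}}$: there is an $\mathrm{HS}$ formula $\psi$ such that no $\mathrm{HS}$ formula $\varphi$ satisfies, for every finite Kripke structure $K$, $K\models_{\mathsf{ct}}\varphi$ iff $K\models_{\mathsf{st}}\psi$.
   Context: A Kripke structure over a finite set $\mathcal{AP}$ is $K=(\mathcal{AP},S,\delta,\mu,s_0)$ with states $S$, left-total $\delta\subseteq S\times S$, labelling $\mu:S\to2^{\mathcal{AP}}$, initial state $s_0$; finite if $S$ is finite. A trace is a non-empty finite prefix of an infinite state sequence following $\delta$; initial if it starts at $s_0$. For a finite word $w=w(0)\cdots w(n)$, $\mathrm{Pref}(w)=\{w[0,i]\mid0\le i\le n-1\}$, $\mathrm{Suff}(w)=\{w[i,n]\mid1\le i\le n\}$. The computation tree $C(K)$ has as states the initial traces of $K$, initial state $s_0$, labelling $\rho\mapsto\mu(\text{last state of }\rho)$, transitions $(\rho,\rho\cdot s)$. $\mathrm{HS}$ formulas: $\psi::=p\mid\neg\psi\mid\psi\wedge\psi\mid\langle X\rangle\psi$ for the Allen relations $A,L,B,E,D,O$ and inverses; all definable (non-strict semantics) from $\langle B\rangle,\langle E\rangle,\langle\bar B\rangle,\langle\bar E\rangle$. State-based semantics over traces: $\rho\models p$ iff $p\in\mu(s)$ for every state $s$ of $\rho$; $\langle B\rangle\psi$: some $\rho'\in\mathrm{Pref}(\rho)$ satisfies $\psi$; $\langle E\rangle\psi$: some $\rho'\in\mathrm{Suff}(\rho)$; $\langle\bar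 B\rangle\psi$: some trace $\rho'$ with $\rho\in\mathrm{Pref}(\rho')$; $\langle\bar E\rangle\psi$: some trace $\rho'$ with $\rho\in\mathrm{Suff}(\rho')$. $K\models_{\mathsf{st}}\psi$ iff every initial trace satisfies $\psi$; $K\models_{\mathsf{ct}}\psi$ iff $C(K)\models_{\mathsf{st}}\psi$. *)

(* Defs.v *)
From Stdlib Require Import List Arith ClassicalEpsilon.
Import ListNotations.
Set Implicit Arguments.

(* Kripke structure over a set AP of proposition letters.
   The state space is an arbitrary type (the computation tree is infinite);
   left-totality of delta is a separate predicate. *)
Record Kripke (AP : Type) := {
  St : Type;
  delta : St -> St -> Prop;
  mu : St -> AP -> Prop;
  s0 : St }.

Arguments St {AP} k.
Arguments delta {AP} k _ _.
Arguments mu {AP} k _ _.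
Arguments s0 {AP} k.

Definition left_total {AP} (K : Kripke AP) : Prop :=
  forall s : St K, exists t, delta K s t.

Definition finite_type (T : Type) : Prop := exists l : list T, forall x, In x l.

Definition finite_kripke {AP} (K : Kripke AP) : Prop :=
  left_total K /\ finite_type (St K).

Definition is_trace {AP} (K : Kripke AP) (rho : list (St K)) : Prop :=
  rho <> [] /\
  exists f : nat -> St K,
    (forall i, delta K (f i) (f (S i))) /\ rho = map f (seq 0 (length rho)).

Definition is_initial_trace {AP} (K : Kripke AP) (rho : list (St K)) : Prop :=
  is_trace K rho /\ hd_error rho = Some (s0 K).

(* HS formulas; the remaining Allen modalities (A, L, D, O and inverses, and
   the inverse forms) are definable from <B>, <E>, <B-bar>, <E-bar>. *)
Inductive hs (AP : Type) : Type :=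
| Prop_ : AP -> hs AP
| Neg : hs AP -> hs AP
| And : hs AP -> hs AP -> hs AP
| DiaB : hs AP -> hs AP
| DiaE : hs AP -> hs AP
| DiaBi : hs AP -> hs AP
| DiaEi : hs AP -> hs AP.

(* Pref(w) = { w[0,i] | 0 <= i <= n-1 } : proper non-empty prefixes
   Suff(w) = { w[i,n] | 1 <= i <= n }   : proper non-empty suffixes
   (w = w(0)...w(n), length n+1). *)
Definition in_Pref {T} (r w : list T) : Prop :=
  exists i, 1 <= i < length w /\ r = firstn i w.
Definition in_Suff {T} (r w : list T) : Prop :=
  exists i, 1 <= i < length w /\ r = skipn i w.

Fixpoint sat {AP} (K : Kripke AP) (rho : list (St K)) (phi : hs AP) : Prop :=
  match phi with
  | Prop_ p => forall s, In s rho -> mu K s p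
  | Neg psi => ~ sat K rho psi
  | And a b => sat K rho a /\ sat K rho b
  | DiaB psi => exists r, in_Pref r rho /\ sat K r psi
  | DiaE psi => exists r, in_Suff r rho /\ sat K r psi
  | DiaBi psi => exists r, is_trace K r /\ in_Pref rho r /\ sat K r psi
  | DiaEi psi => exists r, is_trace K r /\ in_Suff rho r /\ sat K r psi
  end.

Definition models_st {AP} (K : Kripke AP) (psi : hs AP) : Prop :=
  forall rho, is_initial_trace K rho -> sat K rho psi.

Definition CT_state {AP} (K : Kripke AP) : Type :=
  { rho : list (St K) | is_initial_trace K rho }.

Lemma s0_initial_trace {AP} (K : Kripke AP) :
  left_total K -> is_initial_trace K [s0 K].
Proof.
  intros tot.
  set (g := fun s => proj1_sig (constructive_indefinite_description _ (tot s))).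
  assert (Hg : forall s, delta K s (g s))
    by (intro s; unfold g; exact (proj2_sig (constructive_indefinite_description _ (tot s)))).
  set (f := fun n => Nat.iter n g (s0 K)).
  split; [split; [discriminate|] | reflexivity].
  exists f; split; [intro i; simpl; apply Hg | reflexivity].
Qed.

Definition CT {AP} (K : Kripke AP) (tot : left_total K) : Kripke AP :=
  {| St := CT_state K;
     delta := fun r r' => exists s, proj1_sig r' = proj1_sig r ++ [s];
     mu := fun r p => mu K (last (proj1_sig r) (s0 K)) p;
     s0 := exist _ [s0 K] (s0_initial_trace tot) |}.

Definition models_ct {AP} {K : Kripke AP} (tot : left_total K) (psi : hs AP) : Prop :=
  models_st (CT tot) psi.

(* Main.v *)
Require Import Defs.
From Stdlib Require Import List Arith Lia ProofIrrelevance.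
Import ListNotations.

Record iso {AP} (K K' : Kripke AP) := {
  ih : St K -> St K'; ig : St K' -> St K;
  igh : forall x, ig (ih x) = x; ihg : forall y, ih (ig y) = y;
  idelta : forall x y, delta K x y <-> delta K' (ih x) (ih y);
  is0 : ih (s0 K) = s0 K';
  imu : forall x p, mu K x p <-> mu K' (ih x) p }.
Arguments ih {AP K K'}. Arguments ig {AP K K'}. Arguments igh {AP K K'}. Arguments ihg {AP K K'}.
Arguments idelta {AP K K'}. Arguments is0 {AP K K'}. Arguments imu {AP K K'}.

Lemma map_inv {A B} (h : A -> B) (g : B -> A) (H : forall x, g (h x) = x) l :
  map g (map h l) = l.
Proof. rewrite map_map. rewrite (map_ext _ (fun x => x)) by auto. apply map_id. Qed.

Lemma pref_map {A B} (h : A -> B) r w : in_Pref r w -> in_Pref (map h r) (map h w).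
Proof. intros [i [Hi ->]]. exists i. rewrite length_map, firstn_map. auto. Qed.
Lemma suff_map {A B} (h : A -> B) r w : in_Suff r w -> in_Suff (map h r) (map h w).
Proof. intros [i [Hi ->]]. exists i. rewrite length_map, skipn_map. auto. Qed.

Lemma trace_map {AP} (K K' : Kripke AP) (h : St K -> St K')
  (Hd : forall x y, delta K x y -> delta K' (h x) (h y)) r :
  is_trace K r -> is_trace K' (map h r).
Proof.
  intros [Hne [f [Hf Hr]]]. split.
  - destruct r; simpl; congruence.
  - exists (fun n => h (f n)). split; [intro; apply Hd, Hf|].
    rewrite length_map. transitivity (map h (map f (seq 0 (length r)))); [rewrite <- Hr; reflexivity | apply map_map].
Qed.

Section Iso.
Context {AP} (K K' : Kripke AP) (I : iso K K').

Lemma dh x y : delta K x y -> delta K' (ih I x) (ih I y).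
Proof. apply (idelta I). Qed.
Lemma dg x y : delta K' x y -> delta K (ig I x) (ig I y).
Proof. intro H. apply (idelta I). rewrite !(ihg I). exact H. Qed.

Lemma sat_iso phi : forall rho, sat K rho phi <-> sat K' (map (ih I) rho) phi.
Proof.
  induction phi; intro rho; simpl.
  - split.
    + intros H s' Hs. apply in_map_iff in Hs. destruct Hs as [s [<- Hs]].
      apply (imu I). auto.
    + intros H s Hs. apply (imu I). apply H. apply in_map. exact Hs.
  - rewrite IHphi. tauto.
  - rewrite IHphi1, IHphi2. tauto.
  - split.
    + intros [r [Hp Hs]]. exists (map (ih I) r). split; [apply pref_map; auto | apply IHphi; auto].
    + intros [r [Hp Hs]]. exists (map (ig I) r). split.
      * rewrite <- (map_inv (ih I) (ig I) (igh I) rho). apply pref_map; auto.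
      * apply IHphi. rewrite map_inv by apply ihg. auto.
  - split.
    + intros [r [Hp Hs]]. exists (map (ih I) r). split; [apply suff_map; auto | apply IHphi; auto].
    + intros [r [Hp Hs]]. exists (map (ig I) r). split.
      * rewrite <- (map_inv (ih I) (ig I) (igh I) rho). apply suff_map; auto.
      * apply IHphi. rewrite map_inv by apply ihg. auto.
  - split.
    + intros [r [Ht [Hp Hs]]]. exists (map (ih I) r).
      split; [apply trace_map; auto; apply dh|]. split; [apply pref_map; auto | apply IHphi; auto].
    + intros [r [Ht [Hp Hs]]]. exists (map (ig I) r).
      split; [apply trace_map; auto; apply dg|]. split.
      * rewrite <- (map_inv (ih I) (ig I) (igh I) rho). apply pref_map; auto.
      * apply IHphi. rewrite map_inv by apply ihg. auto.
  - split.
    + intros [r [Ht [Hp Hs]]]. exists (map (ih I) r).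
      split; [apply trace_map; auto; apply dh|]. split; [apply suff_map; auto | apply IHphi; auto].
    + intros [r [Ht [Hp Hs]]]. exists (map (ig I) r).
      split; [apply trace_map; auto; apply dg|]. split.
      * rewrite <- (map_inv (ih I) (ig I) (igh I) rho). apply suff_map; auto.
      * apply IHphi. rewrite map_inv by apply ihg. auto.
Qed.

Lemma models_iso phi : models_st K phi <-> models_st K' phi.
Proof.
  split.
  - intros H rho [Ht Hh]. rewrite <- (map_inv (ig I) (ih I) (ihg I) rho).
    apply sat_iso. apply H. split.
    + apply trace_map; auto; apply dg.
    + destruct rho; simpl in *; try discriminate. inversion Hh. subst.
      rewrite <- (is0 I), (igh I). reflexivity.
  - intros H rho [Ht Hh]. apply sat_iso. apply H. split.
    + apply trace_map; auto; apply dh.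
    + destruct rho; simpl in *; try discriminate. inversion Hh. subst.
      rewrite (is0 I). reflexivity.
Qed.
End Iso.

Definition K1 : Kripke unit :=
  {| St := unit; delta := fun _ _ => True; mu := fun _ _ => True; s0 := tt |}.
Definition K2 : Kripke unit :=
  {| St := bool; delta := fun _ t => t = true; mu := fun _ _ => True; s0 := false |}.

Lemma unit_list_eq (l1 l2 : list unit) : length l1 = length l2 -> l1 = l2.
Proof.
  revert l2; induction l1 as [|[] l1 IH]; intros [|[] l2]; simpl; intro H;
    try discriminate; auto. f_equal. apply IH. congruence.
Qed.

Lemma A1 rho : is_initial_trace K1 rho <-> rho <> [].
Proof.
  split.
  - intros [[H _] _]. exact H.
  - intro H. split; [split; auto|].
    + exists (fun _ => tt). split; [intro; exact I|]. apply unit_list_eq.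
      rewrite length_map, length_seq. reflexivity.
    + destruct rho as [|[] ?]; [congruence|reflexivity].
Qed.

Lemma map_seq_true (f : nat -> bool) : (forall i, f (S i) = true) ->
  forall n k, map f (seq (S k) n) = repeat true n.
Proof. intros Hf n. induction n; intro k; simpl; auto. rewrite Hf, IHn. auto. Qed.

Lemma A2 rho : is_initial_trace K2 rho <-> exists n, rho = false :: repeat true n.
Proof.
  split.
  - intros [[Hne [f [Hf Hr]]] Hh].
    destruct rho as [|x rest]; [congruence|]. simpl in Hh. inversion Hh; subst x.
    exists (length rest). simpl in Hr. injection Hr as H0 H1. f_equal.
    rewrite H1 at 1. apply map_seq_true. intro i. apply (Hf i).
  - intros [n ->]. split; [split; [congruence|]|reflexivity].
    exists (fun i => match i with 0 => false | _ => true end). split.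
    + intro i. reflexivity.
    + simpl. f_equal. rewrite repeat_length. symmetry. apply map_seq_true. reflexivity.
Qed.

Lemma lt1 : left_total K1. Proof. intro s. exists tt. exact I. Qed.
Lemma lt2 : left_total K2. Proof. intro s. exists true. reflexivity. Qed.

Lemma ne_len {T} (l : list T) : l <> [] -> length l = S (pred (length l)).
Proof. destruct l; simpl; congruence. Qed.

Lemma rep_ne n : repeat tt (length (false :: repeat true n)) <> [].
Proof. simpl. congruence. Qed.

Section CTIso.
Variables (t1 : left_total K1) (t2 : left_total K2).

Definition hh (x : St (CT t1)) : St (CT t2) :=
  exist _ (false :: repeat true (pred (length (proj1_sig x))))
    (proj2 (A2 _) (ex_intro _ _ eq_refl)).

Lemma y_form (y : St (CT t2)) : exists n, proj1_sig y = false :: repeat true n.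
Proof. apply A2. exact (proj2_sig y). Qed.

Lemma y_ne (y : St (CT t2)) : repeat tt (length (proj1_sig y)) <> [].
Proof. destruct y as [l Hl]; simpl. apply A2 in Hl. destruct Hl as [n ->]. simpl. congruence. Qed.

Definition gg (y : St (CT t2)) : St (CT t1) :=
  exist _ (repeat tt (length (proj1_sig y))) (proj2 (A1 _) (y_ne y)).

Lemma x_ne (x : St (CT t1)) : proj1_sig x <> [].
Proof. exact (proj1 (proj1 (proj2_sig x))). Qed.

Definition CTiso : iso (CT t1) (CT t2).
Proof.
  refine {| ih := hh; ig := gg |}.
  - intro x. apply eq_sig_hprop; [intros; apply proof_irrelevance|].
    simpl. apply unit_list_eq. simpl. rewrite !repeat_length. symmetry. apply ne_len, x_ne.
  - intro y. apply eq_sig_hprop; [intros; apply proof_irrelevance|].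
    destruct y as [l Hl]. simpl. rewrite repeat_length. apply A2 in Hl. destruct Hl as [n ->]. simpl.
    rewrite repeat_length. reflexivity.
  - intros x y. simpl. split.
    + intros [s Hs]. exists true. rewrite Hs, length_app. simpl.
      pose proof (x_ne x) as Hx. destruct x as [l Hl]. simpl in *.
      destruct l; [congruence|]. simpl. rewrite Nat.add_1_r, <- repeat_cons. reflexivity.
    + intros [s Hs]. exists tt. apply unit_list_eq. rewrite length_app. simpl.
      apply (f_equal (@length bool)) in Hs. simpl in Hs.
      rewrite length_app, !repeat_length in Hs. simpl in Hs.
      pose proof (x_ne x) as Hx. pose proof (x_ne y) as Hy.
      destruct x as [l Hl], y as [l' Hl']. simpl in *.
      destruct l; [congruence|]. destruct l'; [congruence|]. simpl in *. lia.
  - apply eq_sig_hprop; [intros; apply proof_irrelevance|]. reflexivity.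
  - intros x p. simpl. tauto.
Defined.
End CTIso.

Lemma K1_psi : models_st K1 (DiaEi (Prop_ tt)).
Proof.
  intros rho Hr. apply A1 in Hr. exists (tt :: rho). split.
  - apply A1. congruence.
  - split.
    + exists 1. split; [simpl; destruct rho; [congruence|]; simpl; lia|]. reflexivity.
    + simpl. intros. exact I.
Qed.

Lemma K2_psi : ~ models_st K2 (DiaEi (Prop_ tt)).
Proof.
  intro H. destruct (H [false] (s0_initial_trace lt2)) as [r [[Hne [f [Hf Hr]]] [[i [Hi Hs]] _]]].
  destruct i as [|j]; [lia|].
  rewrite Hr, skipn_map, skipn_seq in Hs.
  match type of Hs with context [seq _ ?m] => destruct m eqn:E end; [discriminate|].
  simpl in Hs. injection Hs as Hs _. pose proof (Hf j) as Hj. simpl in Hj. congruence.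
Qed.

Lemma fin_unit : finite_type unit.
Proof. exists [tt]. intros []. simpl. auto. Qed.
Lemma fin_bool : finite_type bool.
Proof. exists [true; false]. intros []; simpl; auto. Qed.

Theorem proposition5p1 :
  exists (AP : Type), finite_type AP /\
  exists psi : hs AP,
    forall phi : hs AP,
      ~ (forall (K : Kripke AP) (HK : finite_kripke K),
           models_ct (proj1 HK) phi <-> models_st K psi).
Proof.
  exists unit. split; [exact fin_unit|]. exists (DiaEi (Prop_ tt)). intros phi H.
  set (f1 := conj lt1 fin_unit : finite_kripke K1).
  set (f2 := conj lt2 fin_bool : finite_kripke K2).
  pose proof (H K1 f1) as H1. pose proof (H K2 f2) as H2.
  pose proof (models_iso _ _ (CTiso (proj1 f1) (proj1 f2)) phi) as H3.
  unfold models_ct in *. apply K2_psi. apply H2. apply H3. apply H1. exact K1_psi.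
Qed.
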